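(* For every graph $G$, the graph $KB_m(G)$ contains no induced subgraph isomorphic to a $\mathrm{net}^*$ graph.
   Context: All graphs are finite and simple. A biclique of a graph $G$ is a set $P\subseteq V(G)$ such that the induced subgraph $G[P]$ is a complete bipartite graph with both parts nonempty, and $P$ is inclusion-maximal with this property. Since $G[P]$ is connected, its bipartition into two nonempty independent sets $X,Y$ (every vertex of $X$ adjacent to every vertex of $Y$) is unique; we write $P=XY$ to mean $P=X\cup Y$ with $X,Y$ these two parts, called the sides of $P$. Two bicliques $P,Q$ of $G$ are mutually included if their sides can be named $P=X_PY_P$, $Q=X_QY_Q$ so that $X_Q\subsetneq X_P$ and $Y_P\subsetneq Y_Q$. The mutually included biclique graph $KB_m(G)$ has the set of bicliques of $G$ as vertex set, two distinct bicliques being adjacent iff they are mutually included. The net is the graph on six vertices $x_1,x_2,x_3,s_1,s_2,s_3$ whose edges are $x_1x_2,x_2x_3,x_1x_3,x_1s_1,x_2s_2,x_3s_3$. A $\mathrm{net}^*$ graph is any graph obtained from the net by adding zero or more edges, each joining two vertices of $\{s_1,s_2,s_3\}$. *)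

(* Defs.v *)
From mathcomp Require Import all_boot.
Set Implicit Arguments. Unset Strict Implicit. Unset Printing Implicit Defensive.

(* A finite simple graph: vertex type T : finType, adjacency e : rel T,
   symmetric and irreflexive (hypotheses of the theorem). *)

Section Bicliques.
Variables (T : finType) (e : rel T).

Definition sides (P X Y : {set T}) : bool :=
  [&& X != set0, Y != set0, [disjoint X & Y], X :|: Y == P,
      [forall x in X, forall x' in X, ~~ e x x'],
      [forall y in Y, forall y' in Y, ~~ e y y'] &
      [forall x in X, forall y in Y, e x y]].

Definition complete_bip (P : {set T}) : bool :=
  [exists X : {set T}, exists Y : {set T}, sides P X Y].

Definition is_biclique (P : {set T}) : bool :=
  complete_bip P && [forall Q : {set T}, (P \proper Q) ==> ~~ complete_bip Q].

Definition mut_incl (P Q : {set T}) : bool :=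
  [exists XP : {set T}, exists YP : {set T}, exists XQ : {set T},
   exists YQ : {set T},
     [&& sides P XP YP, sides Q XQ YQ, XQ \proper XP & YP \proper YQ]].

Definition kbm_adj (P Q : {set T}) : bool := (P != Q) && mut_incl P Q.

End Bicliques.

(* net^* graphs on vertex set 'I_6: 0,1,2 = x1,x2,x3 and 3,4,5 = s1,s2,s3.
   b12, b13, b23 say whether the optional edges s1s2, s1s3, s2s3 are added. *)
Definition netstar_adj (b12 b13 b23 : bool) (i j : 'I_6) : bool :=
  let u := nat_of_ord i in let v := nat_of_ord j in
  (u != v) &&
  [|| (u < 3) && (v < 3),
      (u < 3) && (v == u + 3),
      (v < 3) && (u == v + 3),
      [&& minn u v == 3, maxn u v == 4 & b12],
      [&& minn u v == 3, maxn u v == 5 & b13] |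
      [&& minn u v == 4, maxn u v == 5 & b23]].

(* Main.v *)
Require Import Defs.
From mathcomp Require Import all_boot.
Set Implicit Arguments. Unset Strict Implicit. Unset Printing Implicit Defensive.

Definition below (T : finType) (X1 Y1 X2 Y2 : {set T}) : bool :=
  (X1 \proper X2) && (Y2 \proper Y1).

Lemma sidesD (T : finType) (e : rel T) P X Y : sides e P X Y ->
  [/\ exists x, x \in X, exists y, y \in Y,
      (forall z, z \in X -> z \in Y -> False), P = X :|: Y &
   [/\ (forall x x', x \in X -> x' \in X -> ~~ e x x'),
       (forall y y', y \in Y -> y' \in Y -> ~~ e y y') &
       (forall x y, x \in X -> y \in Y -> e x y)]].
Proof.
case/and5P=> /set0Pn h1 /set0Pn h2 h3 /eqP h4 /and3P[h5 h6 h7].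
split=> //.
- by move=> z zX zY; rewrite (disjointFr h3 zX) in zY.
split.
- move=> x x' hx hx'; move/forall_inP: h5 => /(_ x hx) /forall_inP; exact.
- move=> x x' hx hx'; move/forall_inP: h6 => /(_ x hx) /forall_inP; exact.
- move=> x x' hx hx'; move/forall_inP: h7 => /(_ x hx) /forall_inP; exact.
Qed.

Lemma sides_swap (T : finType) (e : rel T) (e_sym : symmetric e) P X Y :
  sides e P X Y -> sides e P Y X.
Proof.
move=> H; case/and5P: H => h1 h2 h3 h4 /and3P[h5 h6 h7].
apply/and5P; split => //; first by rewrite disjoint_sym.
  by rewrite setUC.
apply/and3P; split => //.
apply/forall_inP => y hy; apply/forall_inP => x hx.
rewrite e_sym; move/forall_inP: h7 => /(_ x hx) /forall_inP; exact.
Qed.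

Lemma sides_uniq (T : finType) (e : rel T) P X Y X' Y' :
  sides e P X Y -> sides e P X' Y' ->
  (X' = X /\ Y' = Y) \/ (X' = Y /\ Y' = X).
Proof.
move=> /sidesD [[x0 hx0] [y0 hy0] dXY PXY [iX iY cXY]].
move=> /sidesD [[x1 hx1] [y1 hy1] dXY' PXY' [iX' iY' cXY']].
have memP z : (z \in X) || (z \in Y) = (z \in X') || (z \in Y').
  by rewrite -!in_setU -PXY -PXY'.
have Ydet : forall A B A' B' : {set T}, (forall z, z \in A -> z \in B -> False) ->
   (forall z, z \in A' -> z \in B' -> False) ->
   (forall z, (z \in A) || (z \in B) = (z \in A') || (z \in B')) -> A = A' -> B = B'.
  move=> A B A' B' d d' m eA; subst A'; apply/setP => z; have := m z.
  case: (boolP (z \in A)) => zA /=.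
    by move=> _; apply/idP/idP => h; [case: (d _ zA h) | case: (d' _ zA h)].
  by move=> ->.
case: (boolP [exists z, (z \in X) && (z \in X')]).
- case/existsP => x /andP[xX xX'].
  have EX : X' = X.
    apply/setP => z; apply/idP/idP => hz.
      have := memP z; rewrite hz /= => /orP[zX|zY] //.
      by move: (iX' _ _ xX' hz); rewrite cXY.
    have := memP z; rewrite hz /= => /esym /orP[zX'|zY'] //.
    by move: (iX _ _ xX hz); rewrite cXY'.
  left; split => //; symmetry; apply: (Ydet X Y X' Y') => //; by rewrite EX.
- move=> /existsPn hn.
  have EX : X' = Y.
    apply/setP => z; apply/idP/idP => hz.
      have := memP z; rewrite hz /= => /orP[zX|zY] //.
      by move: (hn z); rewrite zX hz.
    have x0Y' : x0 \in Y'.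
      have := memP x0; rewrite hx0 /= => /esym /orP[h|h] //.
      by move: (hn x0); rewrite hx0 h.
    have := memP z; rewrite hz orbT => /esym /orP[zX'|zY'] //.
    by move: (iY' _ _ x0Y' zY'); rewrite cXY.
  right; split => //.
  have dYX : forall z, z \in Y -> z \in X -> False by move=> z a b; exact: dXY b a.
  symmetry; apply: (Ydet Y X X' Y') => //.
  by move=> z; rewrite orbC memP.
Qed.

Lemma below_trans (T : finType) (X1 Y1 X2 Y2 X3 Y3 : {set T}) :
  below X1 Y1 X2 Y2 -> below X2 Y2 X3 Y3 -> below X1 Y1 X3 Y3.
Proof.
case/andP=> a b /andP[c d]; apply/andP; split; first exact: proper_trans a c.
exact: proper_trans d b.
Qed.

Lemma below_sub (T : finType) (X1 Y1 X2 Y2 : {set T}) :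
  below X1 Y1 X2 Y2 -> {subset X1 <= X2} /\ {subset Y2 <= Y1}.
Proof.
by case/andP=> /proper_sub/subsetP a /proper_sub/subsetP b.
Qed.

Lemma below_disj (T : finType) (e : rel T) P1 X1 Y1 P2 X2 Y2 z :
  sides e P1 X1 Y1 -> sides e P2 X2 Y2 -> below X1 Y1 X2 Y2 ->
  z \in X2 -> z \in Y1 -> False.
Proof.
move=> /sidesD [[x hx] _ _ _ [_ _ c1]] /sidesD [_ _ _ _ [i2 _ _]].
move=> /below_sub [s _] zX2 zY1.
by move: (i2 _ _ (s _ hx) zX2); rewrite c1.
Qed.

Definition cmp (T : finType) (A B C D : {set T}) := below A B C D || below C D A B.

Lemma mk_mut (T : finType) (e : rel T) P Q XP YP XQ YQ :
  sides e P XP YP -> sides e Q XQ YQ -> below XQ YQ XP YP -> mut_incl e P Q.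
Proof.
move=> h1 h2 /andP[h3 h4].
apply/existsP; exists XP; apply/existsP; exists YP; apply/existsP; exists XQ;
apply/existsP; exists YQ; by rewrite h1 h2 h3 h4.
Qed.

Lemma below_swap (T : finType) (X1 Y1 X2 Y2 : {set T}) :
  below X1 Y1 X2 Y2 = below Y2 X2 Y1 X1.
Proof. by rewrite /below andbC. Qed.

Lemma adj_orient (T : finType) (e : rel T) (e_sym : symmetric e) P Q A B :
  sides e P A B -> (mut_incl e P Q || mut_incl e Q P) ->
  exists C D, sides e Q C D /\ cmp A B C D.
Proof.
move=> hP /orP[] /existsP[X1 /existsP[Y1 /existsP[X2 /existsP[Y2]]]]
  /and4P[h1 h2 h3 h4].
- have hb : below X2 Y2 X1 Y1 by rewrite /below h3 h4.
  case: (sides_uniq hP h1) => [[? ?]|[? ?]]; subst.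
    by exists X2, Y2; rewrite /cmp hb orbT.
  exists Y2, X2; split; first exact: sides_swap.
  by rewrite /cmp -below_swap hb.
- have hb : below X2 Y2 X1 Y1 by rewrite /below h3 h4.
  case: (sides_uniq hP h2) => [[? ?]|[? ?]]; subst.
    by exists X1, Y1; rewrite /cmp hb.
  exists Y1, X1; split; first exact: sides_swap.
  have hb' : below Y1 X1 A B by rewrite -below_swap.
  by rewrite /cmp hb' orbT.
Qed.

Lemma comp3 (T : finType) (e : rel T) (e_sym : symmetric e) P Q R A B C D E F :
  sides e P A B -> sides e Q C D -> sides e R E F ->
  cmp A B C D -> cmp E F C D -> (mut_incl e P R || mut_incl e R P) ->
  cmp A B E F.
Proof.
move=> hP hQ hR c1 c2 hm.
case/orP: c1 => c1; case/orP: c2 => c2.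
-
  have [E' [F' [hR' c3]]] := adj_orient e_sym hP hm.
  case: (sides_uniq hR hR') => [[? ?]|[? ?]]; subst => //.
  have [s1 s2] := below_sub c1.
  have [s3 s4] := below_sub c2.
  have /sidesD [_ [d hd] dCD _ _] := hQ.
  case/orP: c3 => /below_sub[s5 s6].
  + have /sidesD [[a ha] _ _ _ _] := hP.
    by case: (below_disj hR hQ c2 (s1 _ ha) (s5 _ ha)).
  + by case: (dCD d (s3 _ (s6 _ (s2 _ hd))) hd).
- by rewrite /cmp (below_trans c1 c2).
- by rewrite /cmp (below_trans c2 c1) orbT.
-
  have [E' [F' [hR' c3]]] := adj_orient e_sym hP hm.
  case: (sides_uniq hR hR') => [[? ?]|[? ?]]; subst => //.
  have [s1 s2] := below_sub c1.
  have [s3 s4] := below_sub c2.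
  have /sidesD [[c hc] _ _ _ _] := hQ.
  have /sidesD [_ [b hb] dAB _ _] := hP.
  case/orP: c3 => /below_sub[s5 s6].
  + by case: (dAB c (s1 _ hc) (s6 _ (s3 _ hc))).
  + by case: (below_disj hQ hR c2 (s6 _ hb) (s2 _ hb)).
Qed.

Lemma middle (T : finType) (e : rel T) (e_sym : symmetric e) Pa Pm Pb Pt
  a1 a2 m1 m2 b1 b2 :
  sides e Pa a1 a2 -> sides e Pm m1 m2 -> sides e Pb b1 b2 ->
  below a1 a2 m1 m2 -> below m1 m2 b1 b2 ->
  (mut_incl e Pm Pt || mut_incl e Pt Pm) ->
  mut_incl e Pb Pt || mut_incl e Pt Pa.
Proof.
move=> ha hm hb c1 c2 hmt.
have [t1 [t2 [ht /orP[c3|c3]]]] := adj_orient e_sym hm hmt.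
- by rewrite (mk_mut ht ha (below_trans c1 c3)) orbT.
- by rewrite (mk_mut hb ht (below_trans c3 c2)).
Qed.

Theorem corollary3 (T : finType) (e : rel T)
    (e_sym : symmetric e) (e_irr : irreflexive e)
    (b12 b13 b23 : bool) (f : 'I_6 -> {set T}) :
  injective f ->
  (forall i, is_biclique e (f i)) ->
  ~ (forall i j, kbm_adj e (f i) (f j) = netstar_adj b12 b13 b23 i j).
Proof.
move=> finj fbi H.
pose o0 := @Ordinal 6 0 isT. pose o1 := @Ordinal 6 1 isT.
pose o2 := @Ordinal 6 2 isT. pose o3 := @Ordinal 6 3 isT.
pose o4 := @Ordinal 6 4 isT. pose o5 := @Ordinal 6 5 isT.
have adj : forall i j, netstar_adj b12 b13 b23 i j = true ->
    mut_incl e (f i) (f j) || mut_incl e (f j) (f i).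
  by move=> i j hN; move: (H i j); rewrite hN => /andP[_ ->].
have nadj : forall i j, netstar_adj b12 b13 b23 i j = false -> i != j ->
    mut_incl e (f i) (f j) -> False.
  move=> i j hN hij hm; move: (H i j); rewrite hN /kbm_adj hm andbT.
  by rewrite (inj_eq finj) hij.
have sd : forall i, exists X Y, sides e (f i) X Y.
  move=> i; case/andP: (fbi i) => /existsP[X /existsP[Y hs]] _.
  by exists X, Y.
have [q1 [q2 hq]] := sd o1.
have [a1 [a2 [ha ca]]] := adj_orient e_sym hq (adj o1 o0 erefl).
have [c1 [c2 [hc cc]]] := adj_orient e_sym hq (adj o1 o2 erefl).
have cac : cmp a1 a2 c1 c2.
  by apply: (comp3 e_sym ha hq hc _ _ (adj o0 o2 erefl)); rewrite /cmp orbC.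
have mid : forall (i m j t : 'I_6) x1 x2 y1 y2 z1 z2,
    sides e (f i) x1 x2 -> sides e (f m) y1 y2 -> sides e (f j) z1 z2 ->
    below x1 x2 y1 y2 -> below y1 y2 z1 z2 ->
    netstar_adj b12 b13 b23 m t = true ->
    netstar_adj b12 b13 b23 j t = false -> j != t ->
    netstar_adj b12 b13 b23 t i = false -> t != i -> False.
  move=> i m j t x1 x2 y1 y2 z1 z2 hx hy hz b1 b2 h1 h2 h3 h4 h5.
  case/orP: (middle e_sym hx hy hz b1 b2 (adj m t h1)) => hm.
    exact: (nadj j t h2 h3 hm).
  exact: (nadj t i h4 h5 hm).
case/orP: ca => ca; case/orP: cc => cc; case/orP: cac => cac.
- exact: (mid o1 o0 o2 o3 _ _ _ _ _ _ hq ha hc ca cac).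
- exact: (mid o1 o2 o0 o5 _ _ _ _ _ _ hq hc ha cc cac).
- have := below_trans (below_trans cc ca) cac.
  by case/andP; rewrite properxx.
- exact: (mid o2 o1 o0 o4 _ _ _ _ _ _ hc hq ha cc ca).
- exact: (mid o0 o1 o2 o4 _ _ _ _ _ _ ha hq hc ca cc).
- have := below_trans (below_trans ca cc) cac.
  by case/andP; rewrite properxx.
- exact: (mid o0 o2 o1 o5 _ _ _ _ _ _ ha hc hq cac cc).
- exact: (mid o2 o0 o1 o3 _ _ _ _ _ _ hc ha hq cac ca).
Qed.
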